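(* Let $\mathbb F$ be a field of characteristic $2$, $S=\{R_0,\dots,R_d\}$ a quasi-thin scheme on $X$, $x\in X$, $\mathcal T=\mathcal T(x)$, $E_a^*=E_a^*(x)$, and $\mathcal J_1=\langle\{E_a^*JE_b^*:R_a,R_b\in S,\ \max\{k_a,k_b\}=2\}\rangle_{\mathbb F}$. Then: (i) $MN,NM\in\mathcal J_1$ for all $M\in\mathcal T$ and $N\in\mathcal J_1$; (ii) $N^3=O$ for every $N\in\mathcal J_1$; (iii) $\mathcal J_1$ is a two-sided nilpotent ideal of $\mathcal T$, and in particular $\mathcal J_1$ is contained in the Jacobson radical of $\mathcal T$.
   Context: Let $X$ be a nonempty finite set. A scheme of class $d$ on $X$ is a partition $S=\{R_0,\dots,R_d\}$ of $X\times X$ into nonempty sets such that $R_0=\{(b,b):b\in X\}$; for each $c$ there is $c'$ with $R_{c'}=\{(f,e):(e,f)\in R_c\}$; and for all $i,j,k$ the intersection number $p_{ij}^k=|\{\ell\in X:(m,\ell)\in R_i,(\ell,n)\in R_j\}|$ does not depend on $(m,n)\in R_k$. The valency is $k_a=p_{aa'}^0$; quasi-thin means all $k_a\le 2$. For $y\in X$, $yR_a=\{z:(y,z)\in R_a\}$; $A_a\in M_X(\mathbb F)$ is the $(0,1)$ adjacency matrix of $R_a$, $E_a^*(y)$ is the diagonal $(0,1)$-matrix with ones exactly at positions indexed by $yR_a$, $J$ the all-ones matrix, $O$ the zero matrix; $\mathcal T(y)$ is the $\mathbb F$-subalgebra of $M_X(\mathbb F)$ generated by $A_0,\dots,A_d,E_0^*(y),\dots,E_d^*(y)$.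 $\langle Y\rangle_{\mathbb F}$ is the $\mathbb F$-span (zero space if $Y=\varnothing$). *)

(* Defs.v *)
From HB Require Import structures.
From mathcomp Require Import all_boot all_order all_algebra.
Set Implicit Arguments. Unset Strict Implicit. Unset Printing Implicit Defensive.
Import GRing.Theory.
Local Open Scope ring_scope.

(* The finite set X is 'I_n; relation R_a is encoded by a function
   r : 'I_n -> 'I_n -> 'I_d.+1 with (y,z) \in R_a  <->  r y z = a.
   tr a is the index a' of the transposed relation. *)

Section Scheme.
Variables (n d : nat) (r : 'I_n -> 'I_n -> 'I_d.+1) (tr : 'I_d.+1 -> 'I_d.+1).

Definition pnum (i j : 'I_d.+1) (m m' : 'I_n) : nat :=
  #|[set l : 'I_n | (r m l == i) && (r l m' == j)]|.

Definition is_scheme : Prop :=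
  [/\
      (forall a : 'I_d.+1, exists y z, r y z = a),
      (forall y z, r y z = ord0 <-> y = z),
      (forall c y z, r z y = c <-> r y z = tr c) &
      (forall i j k m m' m2 m2', r m m' = k -> r m2 m2' = k ->
          pnum i j m m' = pnum i j m2 m2')].

(* valency k_a = p_{a a'}^0, computed at the pair (y,y) \in R_0 *)
Definition valency (y : 'I_n) (a : 'I_d.+1) : nat := pnum a (tr a) y y.

Definition quasi_thin (y : 'I_n) : Prop := forall a, (valency y a <= 2)%N.

Variable F : fieldType.

Definition adjmx (a : 'I_d.+1) : 'M[F]_n := \matrix_(y, z) (r y z == a)%:R.

Definition Estar (x : 'I_n) (a : 'I_d.+1) : 'M[F]_n :=
  \matrix_(y, z) ((y == z) && (r x y == a))%:R.

Definition Jmx : 'M[F]_n := const_mx 1.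

Inductive inT (x : 'I_n) : 'M[F]_n -> Prop :=
  | inT_A a : inT x (adjmx a)
  | inT_E a : inT x (Estar x a)
  | inT_1 : inT x 1%:M
  | inT_0 : inT x 0
  | inT_add M N : inT x M -> inT x N -> inT x (M + N)
  | inT_scale (c : F) M : inT x M -> inT x (c *: M)
  | inT_mul M N : inT x M -> inT x N -> inT x (M *m N).

Definition inJ1 (x : 'I_n) (N : 'M[F]_n) : Prop :=
  exists c : 'I_d.+1 -> 'I_d.+1 -> F,
    N = \sum_(a < d.+1) \sum_(b < d.+1 | maxn (valency x a) (valency x b) == 2%N)
          c a b *: (Estar x a *m Jmx *m Estar x b).

End Scheme.

Section Ideals.
Variables (F : fieldType) (n : nat).
Implicit Types (A L I : 'M[F]_n -> Prop).

Definition left_ideal A L : Prop :=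
  [/\ forall M, L M -> A M, L 0,
      forall M N, L M -> L N -> L (M + N) &
      forall M N, A M -> L N -> L (M *m N)].

Definition two_sided_ideal A I : Prop :=
  [/\ forall M, I M -> A M, I 0,
      forall M N, I M -> I N -> I (M + N),
      forall M N, A M -> I N -> I (M *m N) &
      forall M N, A M -> I N -> I (N *m M)].

Definition maximal_left_ideal A L : Prop :=
  [/\ left_ideal A L, (exists M, A M /\ ~ L M) &
      forall L', left_ideal A L' -> (forall M, L M -> L' M) ->
        (forall M, L' M <-> L M) \/ (forall M, L' M <-> A M)].

Definition jacobson_radical A (M : 'M[F]_n) : Prop :=
  A M /\ forall L, maximal_left_ideal A L -> L M.

Definition mxprod (s : seq 'M[F]_n) : 'M[F]_n := foldr (@mulmx F n n n) 1%:M s.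

Definition nilpotent_ideal I : Prop :=
  exists m : nat, forall s : seq 'M[F]_n,
    size s = m -> (forall M, M \in s -> I M) -> mxprod s = 0.

End Ideals.

(* Main.v *)
Require Import Defs.
From HB Require Import structures.
From mathcomp Require Import all_boot all_order all_algebra zify.
Import GRing.Theory.
Local Open Scope ring_scope.
Set Implicit Arguments. Unset Strict Implicit. Unset Printing Implicit Defensive.

Section Proof.
Variables (F : fieldType) (n d : nat) (r : 'I_n -> 'I_n -> 'I_d.+1)
  (tr : 'I_d.+1 -> 'I_d.+1) (x : 'I_n).
Hypothesis Hs : is_scheme r tr.
Hypothesis Hq : quasi_thin r tr x.
Hypothesis Hc : (2 \in [pchar F])%N.
Implicit Types (N M : 'M[F]_n).

Let Htr : forall c y z, r z y = c <-> r y z = tr c.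
Proof. by case: Hs. Qed.
Let Hp : forall i j k m m' m2 m2', r m m' = k -> r m2 m2' = k ->
          pnum r i j m m' = pnum r i j m2 m2'.
Proof. by case: Hs. Qed.

Lemma trE w y : r w y = tr (r y w).
Proof. exact: (proj1 (Htr (r y w) w y) erefl). Qed.

Lemma trEq c w y : (r y w == c) = (r w y == tr c).
Proof. apply/eqP/eqP; [exact: (proj1 (Htr c w y)) | exact: (proj2 (Htr c w y))]. Qed.

Lemma classE b : valency r tr x b = #|[set l | r x l == b]|.
Proof.
rewrite /valency /pnum; apply: eq_card => l; rewrite !inE.
by case: eqP => // <-; rewrite trE eqxx.
Qed.

Definition D (w : 'I_n) := (valency r tr x (r x w) <= 1)%N.

Lemma uniqD y y' : D y -> r x y' = r x y -> y' = y.
Proof.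
rewrite /D classE => H1 e; apply/eqP; apply: contraLR H1 => ne.
rewrite -ltnNge; apply: (leq_trans _ (subset_leq_card (_ : [set y'; y] \subset _))).
  by rewrite cards2 ne.
by apply/subsetP => l; rewrite !inE => /orP[] /eqP ->; rewrite ?e eqxx.
Qed.

Lemma sameD y w1 w2 : D y -> r x w1 = r x w2 -> r y w1 = r y w2.
Proof.
move=> Dy e.
have : (0 < pnum r (r x y) (r y w1) x w1)%N.
  by rewrite /pnum card_gt0; apply/set0Pn; exists y; rewrite inE !eqxx.
rewrite (@Hp (r x y) (r y w1) (r x w1) x w1 x w2 erefl (esym e)).
rewrite /pnum card_gt0 => /set0Pn[l]; rewrite inE => /andP[/eqP el /eqP ew].
by rewrite -ew (uniqD Dy el).
Qed.

Lemma sameD' y w1 w2 : D y -> r x w1 = r x w2 -> r w1 y = r w2 y.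
Proof. by move=> Dy e; rewrite trE (trE w2) (sameD Dy e). Qed.

Lemma two0 : 2%:R = 0 :> F.
Proof. exact: pcharf0. Qed.

Lemma sum_split (f : 'I_n -> F) :
  (forall w1 w2, r x w1 = r x w2 -> ~~ D w1 -> f w1 = f w2) ->
  \sum_w f w = \sum_(w | D w) f w.
Proof.
move=> Hf; rewrite (bigID D) /=.
suff -> : \sum_(w | ~~ D w) f w = 0 by rewrite addr0.
rewrite (partition_big (fun w => r x w) predT) //=; apply: big1 => b _.
case: (pickP (fun w => ~~ D w && (r x w == b))) => [w0 /andP[nD0 /eqP e0] | none];
  last by rewrite big_pred0.
rewrite (eq_bigr (fun _ => f w0)); last first.
  move=> w /andP[nD /eqP e]; apply: Hf => //; congruence.
rewrite sumr_const (_ : #|_| = 2%N); first by rewrite -mulr_natr two0 mulr0.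
transitivity #|[set l | r x l == b]|.
  apply: eq_card => w; rewrite inE /= unfold_in /=.
  case: (r x w =P b) => [e|_]; last by rewrite andbF.
  by rewrite andbT /D e -e0.
rewrite -classE; move: nD0 (Hq b); rewrite /D e0 -ltnNge => h1 h2.
by apply/eqP; rewrite eqn_leq h2 h1.
Qed.

Lemma sum_class (g : 'I_d.+1 -> F) (P : pred 'I_n) :
  \sum_w (P w)%:R * g (r x w) = \sum_b g b * (#|[set w | (r x w == b) && P w]|)%:R.
Proof.
rewrite (partition_big (fun w => r x w) predT) //=; apply: eq_bigr => b _.
rewrite (eq_bigr (fun w => (P w)%:R * g b)); last by move=> w /eqP ->.
rewrite -big_distrl /= mulrC; congr (_ * _).
rewrite (eq_bigr (fun w => if P w then 1 else 0)); last by move=> w _; case: (P w).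
rewrite -big_mkcondr sumr_const; congr (_ *+ _).
by apply: eq_card => w; rewrite inE.
Qed.

Definition blk (N : 'M[F]_n) :=
  (forall y y' z z', r x y = r x y' -> r x z = r x z' -> N y z = N y' z') /\
  (forall y z, D y -> D z -> N y z = 0).

Lemma exg (f : 'I_n -> F) : (forall w1 w2, r x w1 = r x w2 -> f w1 = f w2) ->
  exists g : 'I_d.+1 -> F, forall w, f w = g (r x w).
Proof.
move=> Hf; exists (fun b => if [pick w | r x w == b] is Some w0 then f w0 else 0) => w.
case: pickP => [w0 /eqP e|/(_ w)]; last by rewrite eqxx.
by apply: Hf; rewrite e.
Qed.

Lemma adjMl c N y z : (adjmx r F c *m N) y z = \sum_w (r y w == c)%:R * N w z.
Proof. by rewrite mxE; apply: eq_bigr => w _; rewrite mxE. Qed.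

Lemma adjMr c N y z : (N *m adjmx r F c) y z = \sum_w N y w * (r w z == c)%:R.
Proof. by rewrite mxE; apply: eq_bigr => w _; rewrite mxE. Qed.

Lemma blkAl c N : blk N -> blk (adjmx r F c *m N).
Proof.
case=> Hk H0; split.
- move=> y y' z z' ey ez; rewrite !adjMl.
  transitivity (\sum_w (r y w == c)%:R * N w z').
    by apply: eq_bigr => w _; rewrite (Hk w w z z').
  have [g Hg] := exg (fun w1 w2 e => Hk w1 w2 z' z' e erefl).
  under eq_bigr do rewrite Hg trEq.
  under [RHS]eq_bigr do rewrite Hg trEq.
  rewrite !sum_class; apply: eq_bigr => b _.
  by move: (@Hp b (tr c) (r x y) x y x y' erefl (esym ey)); rewrite /pnum => ->.
- move=> y z Dy Dz; rewrite adjMl sum_split.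
    by apply: big1 => w Dw; rewrite H0 // mulr0.
  by move=> w1 w2 e _; rewrite (sameD Dy e) (Hk w1 w2 z z e erefl).
Qed.

Lemma blkAr c N : blk N -> blk (N *m adjmx r F c).
Proof.
case=> Hk H0; split.
- move=> y y' z z' ey ez; rewrite !adjMr.
  transitivity (\sum_w N y' w * (r w z == c)%:R).
    by apply: eq_bigr => w _; rewrite (Hk y y' w w).
  have [g Hg] := exg (fun w1 w2 e => Hk y' y' w1 w2 erefl e).
  under eq_bigr do rewrite Hg mulrC.
  under [RHS]eq_bigr do rewrite Hg mulrC.
  rewrite !(sum_class g (fun w => r w _ == c)); apply: eq_bigr => b _.
  by move: (@Hp b c (r x z) x z x z' erefl (esym ez)); rewrite /pnum => ->.
- move=> y z Dy Dz; rewrite adjMr sum_split.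
    by apply: big1 => w Dw; rewrite H0 // mul0r.
  by move=> w1 w2 e _; rewrite (sameD' Dz e) (Hk y y w1 w2 erefl e).
Qed.

Lemma EMl a N : Estar r F x a *m N = \matrix_(y, z) ((r x y == a)%:R * N y z).
Proof.
apply/matrixP => y z; rewrite !mxE (bigD1 y) //= big1 ?addr0.
  by rewrite mxE eqxx.
by move=> w nw; rewrite mxE eq_sym (negbTE nw) mul0r.
Qed.

Lemma EMr a N : N *m Estar r F x a = \matrix_(y, z) (N y z * (r x z == a)%:R).
Proof.
apply/matrixP => y z; rewrite !mxE (bigD1 z) //= big1 ?addr0.
  by rewrite mxE eqxx.
by move=> w nw; rewrite mxE (negbTE nw) mulr0.
Qed.

Lemma blkEl a N : blk N -> blk (Estar r F x a *m N).
Proof.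
case=> Hk H0; rewrite EMl; split.
- by move=> y y' z z' ey ez; rewrite !mxE ey (Hk y y' z z').
- by move=> y z Dy Dz; rewrite !mxE H0 // mulr0.
Qed.

Lemma blkEr a N : blk N -> blk (N *m Estar r F x a).
Proof.
case=> Hk H0; rewrite EMr; split.
- by move=> y y' z z' ey ez; rewrite !mxE ez (Hk y y' z z').
- by move=> y z Dy Dz; rewrite !mxE H0 // mul0r.
Qed.

Lemma blk0 : blk 0.
Proof. by split => *; rewrite !mxE. Qed.

Lemma blkD (N1 N2 : 'M[F]_n) : blk N1 -> blk N2 -> blk (N1 + N2).
Proof.
case=> K1 Z1 [K2 Z2]; split.
- by move=> y y' z z' ey ez; rewrite !mxE (K1 y y' z z') // (K2 y y' z z').
- by move=> y z Dy Dz; rewrite !mxE Z1 // Z2 // addr0.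
Qed.

Lemma blkZ k N : blk N -> blk (k *: N).
Proof.
case=> K1 Z1; split.
- by move=> y y' z z' ey ez; rewrite !mxE (K1 y y' z z').
- by move=> y z Dy Dz; rewrite !mxE Z1 // mulr0.
Qed.

Lemma inT_blk M : inT r x M -> forall N, blk N -> blk (M *m N) /\ blk (N *m M).
Proof.
elim=> [a|a| | |M1 M2 _ IH1 _ IH2|k M1 _ IH|M1 M2 _ IH1 _ IH2] N bN.
- by split; [exact: blkAl | exact: blkAr].
- by split; [exact: blkEl | exact: blkEr].
- by rewrite mul1mx mulmx1.
- by rewrite mul0mx mulmx0; split; exact: blk0.
- rewrite mulmxDl mulmxDr; case: (IH1 N bN); case: (IH2 N bN) => *.
  by split; exact: blkD.
- rewrite -scalemxAl -scalemxAr; case: (IH N bN) => *; by split; exact: blkZ.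
- split.
    by rewrite -mulmxA; exact: (IH1 _ (IH2 N bN).1).1.
  by rewrite mulmxA; exact: (IH2 _ (IH1 N bN).2).2.
Qed.

Lemma EJE a b : Estar r F x a *m Jmx n F *m Estar r F x b =
  \matrix_(y, z) ((r x y == a)%:R * (r x z == b)%:R).
Proof. by rewrite EMr EMl; apply/matrixP => y z; rewrite !mxE mulr1. Qed.

Lemma notcond a b : maxn (valency r tr x a) (valency r tr x b) != 2%N ->
  (valency r tr x a <= 1)%N /\ (valency r tr x b <= 1)%N.
Proof. move: (Hq a) (Hq b); lia. Qed.

Lemma J1_blk N : inJ1 r tr x N -> blk N.
Proof.
case=> c ->; apply: big_ind => [|M1 M2|a _]; [exact: blk0|exact: blkD|].
apply: big_ind => [|M1 M2|b hb]; [exact: blk0|exact: blkD|].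
apply: blkZ; rewrite EJE; split.
- by move=> y y' z z' ey ez; rewrite !mxE ey ez.
- move=> y z Dy Dz; rewrite !mxE.
  case: (r x y =P a) => [ea|]; last by rewrite mul0r.
  case: (r x z =P b) => [eb|]; last by rewrite mulr0.
  move/eqP: hb => hb.
  have : (maxn (valency r tr x a) (valency r tr x b) <= 1)%N.
    by rewrite geq_max -ea -eb; apply/andP; split.
  by rewrite hb.
Qed.

Lemma blk_J1 N : blk N -> inJ1 r tr x N.
Proof.
case=> Hk H0.
exists (fun a b => if [pick y | r x y == a] is Some y0 then
          if [pick z | r x z == b] is Some z0 then N y0 z0 else 0 else 0).
apply/matrixP => y z; rewrite summxE (bigD1 (r x y)) //= [X in _ + X]big1 ?addr0; last first.
  move=> a na; rewrite summxE big1 // => b _.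
  by rewrite mxE EJE !mxE eq_sym (negbTE na) mul0r mulr0.
rewrite summxE.
case hc: (maxn (valency r tr x (r x y)) (valency r tr x (r x z)) == 2%N).
  rewrite (bigD1 (r x z)) //= big1 ?addr0; last first.
    by move=> b /andP[_ nb]; rewrite mxE EJE !mxE eq_sym (negbTE nb) !mulr0.
  rewrite mxE EJE !mxE !eqxx !mulr1.
  case: pickP => [y0 /eqP e1|/(_ y)]; last by rewrite eqxx.
  case: pickP => [z0 /eqP e2|/(_ z)]; last by rewrite eqxx.
  exact: Hk.
rewrite big1; last first.
  move=> b hb; rewrite mxE EJE !mxE.
  case: (r x z =P b) => [eb|_]; last by rewrite !mulr0.
  by rewrite -eb hc in hb.
have [Dy Dz] := notcond (negbT hc).
exact: H0.
Qed.

Lemma J_T : inT r x (Jmx n F).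
Proof.
have -> : Jmx n F = \sum_a adjmx r F a.
  apply/matrixP => y z; rewrite summxE mxE (bigD1 (r y z)) //= big1 ?addr0.
    by rewrite mxE eqxx.
  by move=> a na; rewrite mxE eq_sym (negbTE na).
apply: big_ind => [|M1 M2|a _]; [exact: inT_0|exact: inT_add|exact: inT_A].
Qed.

Lemma J1_T N : inJ1 r tr x N -> inT r x N.
Proof.
case=> c ->; apply: big_ind => [|M1 M2|a _]; [exact: inT_0|exact: inT_add|].
apply: big_ind => [|M1 M2|b _]; [exact: inT_0|exact: inT_add|].
apply: inT_scale; apply: inT_mul; [apply: inT_mul; [exact: inT_E|exact: J_T]|exact: inT_E].
Qed.

Lemma prodD (N1 N2 : 'M[F]_n) y z : blk N1 -> blk N2 ->
  (N1 *m N2) y z = \sum_(w | D w) N1 y w * N2 w z.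
Proof.
case=> K1 _ [K2 _]; rewrite mxE; apply: sum_split => w1 w2 e _.
by rewrite (K1 y y w1 w2 erefl e) (K2 w1 w2 z z e erefl).
Qed.

Lemma prod3 (N1 N2 N3 : 'M[F]_n) : inJ1 r tr x N1 -> inJ1 r tr x N2 -> inJ1 r tr x N3 ->
  N1 *m N2 *m N3 = 0.
Proof.
move=> h1 h2 h3.
have b12 : blk (N1 *m N2) := (inT_blk (J1_T h1) (J1_blk h2)).1.
have [_ v2] := J1_blk h2.
apply/matrixP => y z; rewrite prodD //; last exact: J1_blk.
rewrite mxE big1 // => v Dv.
rewrite prodD //; try exact: J1_blk.
by rewrite big1 ?mul0r // => w Dw; rewrite v2 // mulr0.
Qed.

End Proof.

Theorem corollary6p7 (F : fieldType) (n d : nat)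
    (r : 'I_n -> 'I_n -> 'I_d.+1) (tr : 'I_d.+1 -> 'I_d.+1) (x : 'I_n) :
  (0 < n)%N ->
  (2 \in [pchar F])%N ->
  is_scheme r tr ->
  quasi_thin r tr x ->
  [/\ (forall M N : 'M[F]_n, inT r x M -> inJ1 r tr x N ->
         inJ1 r tr x (M *m N) /\ inJ1 r tr x (N *m M)),
      (forall N : 'M[F]_n, inJ1 r tr x N -> N *m N *m N = 0) &
      [/\ two_sided_ideal (inT (F:=F) r x) (inJ1 (F:=F) r tr x),
          nilpotent_ideal (inJ1 (F:=F) r tr x) &
          forall N : 'M[F]_n, inJ1 r tr x N -> jacobson_radical (inT (F:=F) r x) N]].
Proof.
move=> _ Hc Hs Hq.
have Hi : forall M N : 'M[F]_n, inT r x M -> inJ1 r tr x N ->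
         inJ1 r tr x (M *m N) /\ inJ1 r tr x (N *m M).
  move=> M N TM JN; have [b1 b2] := inT_blk Hs Hq Hc TM (J1_blk JN).
  by split; apply: (blk_J1 Hq Hc).
have P3 := prod3 Hs Hq Hc.
split => //; first by move=> N JN; exact: P3.
split.
- split.
  + by move=> M; apply: J1_T.
  + exact: (blk_J1 Hq Hc (blk0 _ _ _ _)).
  + by move=> M N JM JN; apply: (blk_J1 Hq Hc); apply: blkD; apply: J1_blk.
  + by move=> M N TM JN; case: (Hi M N TM JN).
  + by move=> M N TM JN; case: (Hi M N TM JN).
- exists 3%N => s /eqP Hs3 H; case: s Hs3 H => [|N1 [|N2 [|N3 [|? ?]]]] //= _ H.
  rewrite /mxprod /=.
  have -> : N3 *m 1%:M = N3 by apply: mulmx1.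
  rewrite mulmxA; apply: P3; apply: H; by rewrite !inE eqxx ?orbT.
- move=> N JN; split; first exact: J1_T JN.
  move=> L [[LA L0 LD LM] [M0 [AM0 nLM0]] Hmax].
  pose L' := fun M => exists l t, [/\ L l, inT r x t & M = l + t *m N].
  have lL' : left_ideal (inT (F:=F) r x) L'.
    split.
    * move=> M [l [t [Ll Tt ->]]]; apply: inT_add; first exact: LA.
      by apply: inT_mul => //; exact: J1_T JN.
    * by exists 0, 0; split; [exact: L0|exact: inT_0|rewrite mul0mx addr0].
    * move=> M M' [l1 [t1 [L1 T1 ->]]] [l2 [t2 [L2 T2 ->]]].
      exists (l1 + l2), (t1 + t2); split; [exact: LD|exact: inT_add|].
      by rewrite mulmxDl addrACA.
    * move=> M M' TM [l [t [Ll Tt ->]]].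
      exists (M *m l), (M *m t); split; [exact: LM|exact: inT_mul|].
      by rewrite mulmxDr mulmxA.
  have sub : forall M, L M -> L' M.
    by move=> M LMM; exists M, 0; split => //; [exact: inT_0|rewrite mul0mx addr0].
  case: (Hmax L' lL' sub) => eq.
    apply/eq; exists 0, 1%:M; split; [exact: L0|exact: inT_1|by rewrite mul1mx add0r].
  exfalso.
  have T1 : inT r x (1%:M : 'M[F]_n) by exact: inT_1.
  have [l [t [Ll Tt e1]]] := proj2 (eq 1%:M) T1.
  set K := t *m N in e1.
  have JK : inJ1 r tr x K by case: (Hi t N Tt JN).
  have KKK : K *m K *m K = 0 by apply: P3.
  have TK : inT r x K by apply: (J1_T JK).
  pose P := 1%:M + K + K *m K.
  have TP : inT r x P by apply: inT_add; [apply: inT_add => //; exact: inT_1|apply: inT_mul].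
  have le : l = 1%:M - K by rewrite e1 addrK.
  have Pl : P *m l = 1%:M.
    rewrite le mulmxBr mulmx1 /P !mulmxDl mul1mx KKK addr0.
    by rewrite -[1%:M + K + _]addrA addrK.
  have L1 : L 1%:M by rewrite -Pl; apply: LM.
  by apply: nLM0; rewrite -(mulmx1 M0); apply: LM.
Qed.
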